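(* Let $\eta^{(\varepsilon)}_n$, $\varepsilon\in(0,1]$, be Markov chains on $\mathbb{X}=\{1,\dots,N\}$ with transition probabilities $p_{ij}(\varepsilon)$ satisfying conditions A and D of the context for some $\varepsilon_0\in(0,1]$ and transition sets $\mathbb{Y}_i$. Fix $r\in\mathbb{X}$ and let $_r\eta^{(\varepsilon)}_n$ be the reduced Markov chain on $_r\mathbb{X}=\mathbb{X}\setminus\{r\}$, with transition probabilities $_rp_{ij}(\varepsilon)$, $i,j\in{}_r\mathbb{X}$. Then conditions A and D hold for the chains $_r\eta^{(\varepsilon)}_n$ with the same $\varepsilon_0$ and with transition sets $_r\mathbb{Y}_i=\mathbb{Y}^-_{ir}\cup\mathbb{Y}^+_{ir}$, $i\in{}_r\mathbb{X}$; in particular, for every $j\in{}_r\mathbb{Y}_i$, $i\in{}_r\mathbb{X}$, $_rp_{ij}(\varepsilon)$ admits a pivotal $(_rl^-_{ij},{}_rl^+_{ij})$-expansion $_rp_{ij}(\varepsilon)=\sum_{l={}_rl^-_{ij}}^{_rl^+_{ij}}{}_ra_{ij}[l]\varepsilon^l+{}_ro_{ij}(\varepsilon^{_rl^+_{ij}})$, $\varepsilon\in(0,\varepsilon_0]$, with $0\le{}_rl^-_{ij}\le{}_rl^+_{ij}$ and $_ra_{ij}[_rl^-_{ij}]>0$.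
   Context: A $(h,k)$-expansion of a function $A$ on $(0,\varepsilon_0]$ is a representation $A(\varepsilon)=\sum_{l=h}^k a_l\varepsilon^l+o_A(\varepsilon^k)$ with integers $h\le k$, real $a_l$, and $o_A(\varepsilon^k)/\varepsilon^k\to0$ as $\varepsilon\to0$; pivotal means $a_h\ne0$. For $\varepsilon\in(0,1]$, $\eta^{(\varepsilon)}_n$ is a homogeneous Markov chain on $\mathbb{X}=\{1,\dots,N\}$ with stochastic transition matrix $\|p_{ij}(\varepsilon)\|$. Condition A: there exist $\mathbb{Y}_i\subseteq\mathbb{X}$, $i\in\mathbb{X}$, and $\varepsilon_0\in(0,1]$ such that for $\varepsilon\in(0,\varepsilon_0]$: (a) $p_{ij}(\varepsilon)>0$ for $j\in\mathbb{Y}_i$; (b) $p_{ij}(\varepsilon)=0$ for $j\notin\mathbb{Y}_i$; (c) for every $i,j\in\mathbb{X}$ there exist $n\ge1$ and $i=l_0,\dots,l_n=j$ with $l_{k+1}\in\mathbb{Y}_{l_k}$. Condition D: for $j\in\mathbb{Y}_i$, $i\in\mathbb{X}$: $p_{ij}(\varepsilon)=\sum_{l=l^-_{ij}}^{l^+_{ij}}a_{ij}[l]\varepsilon^l+o_{ij}(\varepsilon^{l^+_{ij}})$, $\varepsilon\in(0,\varepsilon_0]$, with integers $0\le l^-_{ij}\le l^+_{ij}<\infty$, $a_{ij}[l^-_{ij}]>0$ and $o_{ij}(\varepsilon^{l^+_{ij}})/\varepsilon^{l^+_{ij}}\to0$. Reduced chain: $_r\xi_0=0$, $_r\xi_n=\min\{k>{}_r\xi_{n-1}:\eta^{(\varepsilon)}_k\ne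 r\}$, $_r\eta^{(\varepsilon)}_n=\eta^{(\varepsilon)}_{_r\xi_n}$ (started from a state in $_r\mathbb{X}$); its transition probabilities are $_rp_{ij}(\varepsilon)=p_{ij}(\varepsilon)+p_{ir}(\varepsilon)\frac{p_{rj}(\varepsilon)}{1-p_{rr}(\varepsilon)}$, $i,j\in{}_r\mathbb{X}$. Sets: $\mathbb{Y}^-_{ir}=\{j\in{}_r\mathbb{X}:j\in\mathbb{Y}_r\}$ if $r\in\mathbb{Y}_i$ and $\mathbb{Y}^-_{ir}=\emptyset$ if $r\notin\mathbb{Y}_i$; $\mathbb{Y}^+_{ir}=\{j\in{}_r\mathbb{X}:j\in\mathbb{Y}_i\}$. *)

(* Defs.v *)
From HB Require Import structures.
From mathcomp Require Import all_boot all_order all_algebra.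
From mathcomp Require Import all_classical all_reals all_analysis.
Set Implicit Arguments. Unset Strict Implicit. Unset Printing Implicit Defensive.
Import Order.TTheory GRing.Theory Num.Theory.
Import numFieldNormedType.Exports.
Local Open Scope ring_scope.
Local Open Scope classical_set_scope.

Definition expansion (R : realType) (A : R -> R) (eps0 : R) (h k : nat) (a : nat -> R) : Prop :=
  (h <= k)%N /\
  exists o : R -> R,
    (forall e, 0 < e <= eps0 -> A e = \sum_(h <= l < k.+1) a l * e ^+ l + o e) /\
    (fun e => o e / e ^+ k) @ 0^'+ --> (0 : R).

Local Close Scope classical_set_scope.

Definition pivotal_expansion (R : realType) (A : R -> R) (eps0 : R) (h k : nat) (a : nat -> R) : Prop :=
  expansion A eps0 h k a /\ a h != 0.

Definition stochastic (R : realType) (T : finType) (P : T -> T -> R) : Prop :=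
  (forall i j, 0 <= P i j) /\ (forall i, \sum_(j : T) P i j = 1).

Definition condA (R : realType) (T : finType) (p : R -> T -> T -> R)
    (Y : T -> {set T}) (eps0 : R) : Prop :=
  [/\ (forall e, 0 < e <= eps0 -> forall i j, j \in Y i -> 0 < p e i j),
      (forall e, 0 < e <= eps0 -> forall i j, j \notin Y i -> p e i j = 0) &
      (forall i j : T, exists s : seq T,
          [/\ (0 < size s)%N, path (fun x y => y \in Y x) i s & last i s = j])].

Definition condD (R : realType) (T : finType) (p : R -> T -> T -> R)
    (Y : T -> {set T}) (eps0 : R) : Prop :=
  forall i j, j \in Y i ->
    exists (lm lp : nat) (a : nat -> R),
      expansion (fun e => p e i j) eps0 lm lp a /\ 0 < a lm.

Definition redX (N : nat) (r : 'I_N) := {i : 'I_N | i != r}.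
HB.instance Definition _ (N : nat) (r : 'I_N) := Finite.on (redX r).

Definition red_p (R : realType) (N : nat) (p : R -> 'I_N -> 'I_N -> R) (r : 'I_N)
    (e : R) (i j : redX r) : R :=
  p e (val i) (val j) + p e (val i) r * (p e r (val j) / (1 - p e r r)).

Arguments red_p {R N} p r e i j.

Definition Yminus (N : nat) (Y : 'I_N -> {set 'I_N}) (r : 'I_N) (i : redX r) : {set redX r} :=
  if r \in Y (val i) then [set j : redX r | val j \in Y r] else finset.set0.
Arguments Yminus {N} Y r i.
Definition Yplus (N : nat) (Y : 'I_N -> {set 'I_N}) (r : 'I_N) (i : redX r) : {set redX r} :=
  [set j : redX r | val j \in Y (val i)].
Arguments Yplus {N} Y r i.
Definition red_Y (N : nat) (Y : 'I_N -> {set 'I_N}) (r : 'I_N) (i : redX r) : {set redX r} :=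
  Yminus Y r i :|: Yplus Y r i.
Arguments red_Y {N} Y r i.

(* Main.v *)
Require Import Defs.
From HB Require Import structures.
From mathcomp Require Import all_boot all_order all_algebra.
From mathcomp Require Import all_classical all_reals all_analysis.
From mathcomp Require Import ring lra.
Set Implicit Arguments. Unset Strict Implicit. Unset Printing Implicit Defensive.
Import Order.TTheory GRing.Theory Num.Theory.
Import numFieldNormedType.Exports.
Local Open Scope ring_scope.
Local Open Scope classical_set_scope.

Section Ord.
Variable R : realType.
Implicit Types A B D : R -> R.

Definition ordP A (h : nat) (c : R) := (fun e => A e / e ^+ h) @ 0^'+ --> c.
Definition hasOrd A := exists h c, 0 < c /\ ordP A h c.
Definition nearZ A := \forall e \near (0:R)^'+, A e = 0.
Definition ZO A := nearZ A \/ hasOrd A.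

Lemma powcvg n : (fun e : R => e ^+ n) @ 0^'+ --> (0:R) ^+ n.
Proof. by apply: cvg_at_right_filter; exact: exprn_continuous. Qed.

Lemma near_pos : \forall e \near (0:R)^'+, 0 < e.
Proof. exact: nbhs_right_gt. Qed.

Lemma ordP_eq A B h c : (\forall e \near (0:R)^'+, A e = B e) -> ordP A h c -> ordP B h c.
Proof.
move=> AB H; apply: (cvg_trans _ H); apply: near_eq_cvg.
by apply: filterS AB => e /= ->.
Qed.

Lemma ord_sum A B h1 h2 c1 c2 : 0 < c1 -> 0 < c2 -> ordP A h1 c1 -> ordP B h2 c2 ->
  exists c, 0 < c /\ ordP (fun e => A e + B e) (minn h1 h2) c.
Proof.
wlog le12 : A B h1 h2 c1 c2 / (h1 <= h2)%N.
  move=> W c1p c2p HA HB; case hle: (h1 <= h2)%N; first exact: (W A B h1 h2 c1 c2).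
  have hle' : (h2 <= h1)%N by rewrite leqNgt; apply/negP => /ltnW; rewrite hle.
  have [c [cp Hc]] := W B A h2 h1 c2 c1 hle' c2p c1p HB HA.
  exists c; split => //; rewrite minnC; apply: ordP_eq Hc.
  by near=> e; rewrite addrC.
move=> c1p c2p HA HB; exists (c1 + c2 * 0 ^+ (h2 - h1)); split.
  have h0 : 0 <= c2 * 0 ^+ (h2 - h1) by apply: mulr_ge0; [exact: ltW|exact: exprn_ge0].
  lra.
rewrite /ordP (minn_idPl le12).
have H := cvgD HA (cvgM HB (@powcvg (h2 - h1))).
rewrite /ordP; first [apply: (cvg_trans _ H) | apply: (cvg_trans _ (H _)) | apply: (cvg_trans _ (H _ _))]; apply: near_eq_cvg; near=> e.
have e0 : e != 0 by rewrite gt_eqF //; near: e; exact: near_pos.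
rewrite mulrDl /=; congr (_ + _).
change (B e / e ^+ h2 * e ^+ (h2 - h1) = B e / e ^+ h1).
have -> : e ^+ h2 = e ^+ (h2 - h1) * e ^+ h1 by rewrite -exprD subnK.
have ? : e ^+ (h2 - h1) != 0 by exact: expf_neq0.
have ? : e ^+ h1 != 0 by exact: expf_neq0.
by rewrite invfM [_^-1 * _^-1]mulrC mulrA -mulrA mulVf // mulr1.
Unshelve. all: by end_near. Qed.

Lemma ord_sumz A B h c : ordP A h c -> nearZ B -> ordP (fun e => A e + B e) h c.
Proof. move=> HA HB; apply: ordP_eq HA; by apply: filterS HB => e /= ->; rewrite addr0. Qed.

Lemma ord_mul A B h1 h2 c1 c2 : ordP A h1 c1 -> ordP B h2 c2 ->
  ordP (fun e => A e * B e) (h1 + h2) (c1 * c2).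
Proof.
move=> HA HB; have H := cvgM HA HB.
rewrite /ordP; first [apply: (cvg_trans _ H) | apply: (cvg_trans _ (H _)) | apply: (cvg_trans _ (H _ _))]; apply: near_eq_cvg; near=> e.
have e0 : e != 0 by rewrite gt_eqF //; near: e; exact: near_pos.
change (A e / e ^+ h1 * (B e / e ^+ h2) = A e * B e / e ^+ (h1 + h2)).
by rewrite exprD invfM; rewrite -!mulrA; congr (_ * _); rewrite mulrCA.
Unshelve. all: by end_near. Qed.

Lemma ord_div A D h1 h2 c1 c2 : (h2 <= h1)%N -> c2 != 0 -> ordP A h1 c1 -> ordP D h2 c2 ->
  ordP (fun e => A e / D e) (h1 - h2) (c1 / c2).
Proof.
move=> le21 c20 HA HD; have H := cvgM HA (cvgV c20 HD).
rewrite /ordP; first [apply: (cvg_trans _ H) | apply: (cvg_trans _ (H _)) | apply: (cvg_trans _ (H _ _))]; apply: near_eq_cvg; near=> e.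
have e0 : e != 0 by rewrite gt_eqF //; near: e; exact: near_pos.
have x0 : e ^+ h2 != 0 by exact: expf_neq0.
change (A e / e ^+ h1 * (D e / e ^+ h2)^-1 = A e / D e / e ^+ (h1 - h2)).
have -> : e ^+ h1 = e ^+ (h1 - h2) * e ^+ h2 by rewrite -exprD subnK.
rewrite !invfM invrK.
set x := e ^+ h2; set y := e ^+ (h1 - h2).
transitivity (A e * (D e)^-1 * y^-1 * (x^-1 * x)); last by rewrite mulVf // mulr1.
by ring.
Unshelve. all: by end_near. Qed.

Lemma ZO_ext A B : (forall e, A e = B e) -> ZO A -> ZO B.
Proof. by move=> AB; have -> : A = B by apply: funext. Qed.

Lemma hasOrd_sumL A B : hasOrd A -> ZO B -> hasOrd (fun e => A e + B e).
Proof.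
move=> [h1 [c1 [c1p HA]]] [zB|[h2 [c2 [c2p HB]]]].
- by exists h1, c1; split => //; exact: (ord_sumz HA zB).
- have [c [cp Hc]] := ord_sum c1p c2p HA HB; by exists (minn h1 h2), c.
Qed.

Lemma hasOrd_sumR A B : ZO A -> hasOrd B -> hasOrd (fun e => A e + B e).
Proof.
move=> zA oB; have [h [c [cp H]]] := hasOrd_sumL oB zA.
exists h, c; split => //; apply: (ordP_eq _ H); by near=> e; rewrite addrC.
Unshelve. all: by end_near. Qed.

Lemma ZO_add A B : ZO A -> ZO B -> ZO (fun e => A e + B e).
Proof.
move=> zA zB; case: (zA) => [nA|oA]; last by right; apply: hasOrd_sumL.
case: (zB) => [nB|oB]; last by right; apply: hasOrd_sumR.
left; by apply: filterS2 nA nB => e /= -> ->; rewrite addr0.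
Qed.

Lemma ZO_sum (I : Type) (s : seq I) (P : pred I) (f : I -> R -> R) :
  (forall k, P k -> ZO (f k)) -> ZO (fun e => \sum_(k <- s | P k) f k e).
Proof.
move=> H; elim: s => [|k s IH].
  apply: (@ZO_ext (fun _ => 0)); first by move=> e; rewrite big_nil.
  by left; near=> e.
case Pk: (P k).
  apply: (@ZO_ext (fun e => f k e + \sum_(k <- s | P k) f k e)).
    by move=> e; rewrite big_cons Pk.
  exact: ZO_add (H _ Pk) IH.
apply: ZO_ext IH => e; by rewrite big_cons Pk.
Unshelve. all: by end_near. Qed.

Lemma sumcvg (s : seq nat) (f : nat -> R -> R) (a : nat -> R) :
  (forall l, f l @ 0^'+ --> a l) ->
  (fun e => \sum_(l <- s) f l e) @ 0^'+ --> \sum_(l <- s) a l.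
Proof.
move=> H; elim: s => [|l s IH].
  rewrite big_nil; under eq_cvg do rewrite big_nil; exact: cvg_cst.
rewrite big_cons; under eq_cvg do rewrite big_cons.
exact: (cvgD (H l) IH).
Qed.

Lemma exp_ord A eps0 lm lp a : 0 < eps0 -> expansion A eps0 lm lp a -> ordP A lm (a lm).
Proof.
move=> e0p [hle [oo [Heq Ho]]].
have H1 : (fun e => \sum_(l <- index_iota lm lp.+1) a l * e ^+ (l - lm)) @ 0^'+ -->
          \sum_(l <- index_iota lm lp.+1) a l * 0 ^+ (l - lm).
  apply: sumcvg => l; apply: cvgMl_tmp; exact: powcvg.
have H2 := cvgM Ho (@powcvg (lp - lm)).
have H3 := cvgD H1 (H2 _).
have -> : a lm = \sum_(l <- index_iota lm lp.+1) a l * 0 ^+ (l - lm) + 0 * 0 ^+ (lp - lm).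
  rewrite mul0r addr0 big_ltn ?ltnS // subnn expr0 mulr1.
  rewrite big_nat_cond big1 ?addr0 // => l /andP[/andP[Hl _] _].
  by rewrite expr0n subn_eq0 leqNgt Hl mulr0.
rewrite /ordP; first [apply: (cvg_trans _ H3) | apply: (cvg_trans _ (H3 _)) | apply: (cvg_trans _ (H3 _ _))]; apply: near_eq_cvg; near=> e.
have e0 : e != 0 by rewrite gt_eqF //; near: e; exact: near_pos.
have ee : 0 < e <= eps0.
  apply/andP; split; near: e; [exact: near_pos | exact: nbhs_right_le].
change (\sum_(l <- index_iota lm lp.+1) a l * e ^+ (l - lm) + oo e / e ^+ lp * e ^+ (lp - lm)
   = A e / e ^+ lm).
rewrite (Heq e ee) mulrDl big_distrl /=; congr (_ + _).
  rewrite !big_seq; apply: eq_bigr => l; rewrite mem_index_iota => /andP[Hl _].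
  have -> : e ^+ l = e ^+ (l - lm) * e ^+ lm by rewrite -exprD subnK.
  by rewrite mulrA mulfK // expf_neq0.
have -> : e ^+ lp = e ^+ (lp - lm) * e ^+ lm by rewrite -exprD subnK.
by rewrite invfM [_^-1 * _^-1]mulrC mulrA -mulrA mulVf ?mulr1 // expf_neq0.
Unshelve. all: by end_near. Qed.

Lemma ord_exp A eps0 h c : ordP A h c -> expansion A eps0 h h (fun _ => c).
Proof.
move=> H; split => //; exists (fun e => A e - c * e ^+ h); split.
  by move=> e _; rewrite big_nat1 addrC subrK.
have H2 := cvgB H (cvg_cst c); rewrite subrr in H2.
first [apply: (cvg_trans _ H2) | apply: (cvg_trans _ (H2 _)) | apply: (cvg_trans _ (H2 _ _))]; apply: near_eq_cvg; near=> e.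
have e0 : e != 0 by rewrite gt_eqF //; near: e; exact: near_pos.
change (A e / e ^+ h - c = (A e - c * e ^+ h) / e ^+ h).
by rewrite mulrBl mulfK // expf_neq0.
Unshelve. all: by end_near. Qed.

End Ord.

Lemma red_path N (Y : 'I_N -> {set 'I_N}) r (j : redX r) : forall s (x : 'I_N) (a : redX r),
  (x = val a \/ (x = r /\ r \in Y (val a))) ->
  path (fun x y => y \in Y x) x s -> last x s = val j ->
  exists t, [/\ path (fun x y => y \in red_Y Y r x) a t, last a t = j &
                 (0 < size s)%N -> (0 < size t)%N].
Proof.
elim=> [|y s IH] x a Hx /=.
- move=> _ Hl; case: Hx => [Hxa|[Hxr _]].
  + by exists [::]; split => //=; apply: val_inj; rewrite /= -Hxa.
  + by exfalso; move: (valP j) => /=; rewrite -Hl Hxr eqxx.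
- move=> /andP[Hy Hp] Hl.
  case: (eqVneq y r) => [Hyr|Hyr].
  + have Hs : (0 < size s)%N.
      move: Hp Hl; clear IH; case: s => //= _ Hl.
      by move: (valP j) => /=; rewrite -Hl Hyr eqxx.
    have Hya : y = val a \/ (y = r /\ r \in Y (val a)).
      right; split => //; case: Hx => [Hxa | [Hxr Hra]] //.
      by move: Hy; rewrite Hyr Hxa.
    have [t [Ht Hlt Hsz]] := IH y a Hya Hp Hl.
    by exists t; split => // _; exact: Hsz.
  + pose b : redX r := exist _ y Hyr.
    have Hb : b \in red_Y Y r a.
      rewrite /red_Y inE; case: Hx => [Hxa|[Hxr Hra]].
      * by apply/orP; right; rewrite /Yplus inE /= -Hxa.
      * by apply/orP; left; rewrite /Yminus Hra inE /= -Hxr.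
    have [t [Ht Hlt _]] := IH y b (or_introl erefl) Hp Hl.
    by exists (b :: t); split => //=; rewrite Hb Ht.
Qed.

Lemma exit_r N (Y : 'I_N -> {set 'I_N}) r : forall s x, x = r ->
  path (fun x y => y \in Y x) x s -> last x s != r -> exists y, y != r /\ y \in Y r.
Proof.
elim=> [|y s IH] x Hx /=; first by rewrite Hx eqxx.
move=> /andP[Hy Hp] Hl; case: (eqVneq y r) => [Hyr|Hyr].
  exact: IH y Hyr Hp Hl.
by exists y; split => //; rewrite -Hx.
Qed.

Unset Implicit Arguments.

Theorem theorem2 (R : realType) (N : nat) (p : R -> 'I_N -> 'I_N -> R)
    (Y : 'I_N -> {set 'I_N}) (eps0 : R) (r : 'I_N) :
  (forall e : R, 0 < e <= 1 -> stochastic (p e)) ->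
  0 < eps0 <= 1 ->
  condA p Y eps0 -> condD p Y eps0 ->
  condA (red_p p r) (red_Y Y r) eps0 /\ condD (red_p p r) (red_Y Y r) eps0.
Proof.
move=> Hst /andP[e0p e01] [A1 A2 A3] HD.
have eps1 : forall e, 0 < e <= eps0 -> 0 < e <= 1.
  by move=> e /andP[-> h]; rewrite (le_trans h e01).
have pge0 : forall e x y, 0 < e <= eps0 -> 0 <= p e x y.
  by move=> e x y /eps1/Hst [h _].
have Dsum : forall e, 0 < e <= eps0 -> 1 - p e r r = \sum_(k | k != r) p e r k.
  by move=> e /eps1/Hst [_ hs]; rewrite -(hs r) (bigD1 r) //= addrC addrK.
have Dpos : forall (i : redX r) e, 0 < e <= eps0 -> 0 < 1 - p e r r.
  move=> i e he; have [s [_ Hp Hl]] := A3 r (val i).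
  have Hl' : last r s != r by rewrite Hl; exact: (valP i).
  have [y [Hyr Hy]] := exit_r erefl Hp Hl'.
  rewrite (Dsum e he) (bigD1 y) //=.
  have h1 := A1 e he _ _ Hy.
  have h2 : 0 <= \sum_(k | (k != r) && (k != y)) p e r k by apply: sumr_ge0 => k _; exact: pge0.
  lra.
have near_small : \forall e \near (0:R)^'+, 0 < e <= eps0.
  near=> e; apply/andP; split; near: e; [exact: nbhs_right_gt | exact: nbhs_right_le].
split.
  split.
  - move=> e he i j; rewrite /red_Y inE => /orP[]; rewrite /Yminus /Yplus /red_p.
    + case: ifP => Hri; last by rewrite inE.
      rewrite inE => Hj.
      have h1 := A1 e he _ _ Hri; have h2 := A1 e he _ _ Hj.
      have h3 := Dpos i e he; have h4 := pge0 e (val i) (val j) he.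
      have h5 : 0 < p e (val i) r * (p e r (val j) / (1 - p e r r)).
        by rewrite mulr_gt0 // divr_gt0.
      lra.
    + rewrite inE => Hj.
      have h1 := A1 e he _ _ Hj; have h3 := Dpos i e he.
      have h5 : 0 <= p e (val i) r * (p e r (val j) / (1 - p e r r)).
        by rewrite mulr_ge0 ?divr_ge0 ?pge0 // ltW.
      lra.
  - move=> e he i j; rewrite /red_Y inE negb_or => /andP[Hm Hp].
    rewrite /Yplus inE in Hp; rewrite /red_p (A2 e he _ _ Hp) add0r.
    move: Hm; rewrite /Yminus; case: ifP => Hri; rewrite ?inE => Hm.
      by rewrite (A2 e he _ _ Hm) mul0r mulr0.
    by rewrite (A2 e he _ _ (negbT Hri)) mul0r.
  - move=> i j; have [s [Hs Hp Hl]] := A3 (val i) (val j).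
    have [t [Ht Hlt Hsz]] := red_path (or_introl erefl) Hp Hl.
    by exists t; split => //; exact: Hsz.
move=> i j Hj.
have pord : forall x y, y \in Y x -> hasOrd (fun e => p e x y).
  move=> x y Hxy; have [lm [lp [a [Hexp Ha]]]] := HD x y Hxy.
  by exists lm, (a lm); split => //; exact: exp_ord e0p Hexp.
have pzo : forall x y, ZO (fun e => p e x y).
  move=> x y; case: (boolP (y \in Y x)) => H; first by right; exact: pord.
  by left; apply: filterS near_small => e he; exact: A2 e he _ _ H.
pose T2 := fun e => p e (val i) r * (p e r (val j) / (1 - p e r r)).
have HT2 : r \in Y (val i) -> val j \in Y r -> hasOrd T2.
  move=> Hri Hrj.
  have [h0 [c0 [c0p H0]]] := pord _ _ Hri.
  have [lm [lp [a [Hexp Ha]]]] := HD _ _ Hrj.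
  have H1 := exp_ord e0p Hexp.
  pose rest := fun e => \sum_(k | (k != r) && (k != val j)) p e r k.
  have zr : ZO rest by apply: ZO_sum => k _; exact: pzo.
  have Deq : \forall e \near (0:R)^'+, p e r (val j) + rest e = 1 - p e r r.
    apply: filterS near_small => e he.
    by rewrite (Dsum e he) (bigD1 (val j) (valP j)).
  have [h2 [c2 [le21 [c2p H2]]]] : exists h2 c2, (h2 <= lm)%N /\ 0 < c2 /\
      ordP (fun e => 1 - p e r r) h2 c2.
    case: zr => [zR|[h' [c' [c'p H']]]].
      by exists lm, (a lm); split => //; split => //; exact: ordP_eq Deq (ord_sumz H1 zR).
    have [c [cp Hc]] := ord_sum Ha c'p H1 H'.
    exists (minn lm h'), c; split; first exact: geq_minl.
    by split => //; exact: ordP_eq Deq Hc.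
  have Hq := ord_div le21 (lt0r_neq0 c2p) H1 H2.
  have Hm := ord_mul H0 Hq.
  exists (h0 + (lm - h2))%N, (c0 * (a lm / c2)); split; last exact: Hm.
  by rewrite mulr_gt0 // divr_gt0.
have T2zo : ZO T2.
  case: (boolP (r \in Y (val i))) => Hri; last first.
    left; apply: filterS near_small => e he.
    by rewrite /T2 (A2 e he _ _ Hri) mul0r.
  case: (boolP (val j \in Y r)) => Hrj; last first.
    left; apply: filterS near_small => e he.
    by rewrite /T2 (A2 e he _ _ Hrj) mul0r mulr0.
  by right; exact: HT2.
suff [h [c [cp H]]] : hasOrd (fun e => red_p p r e i j).
  by exists h, h, (fun _ => c); split => //; exact: ord_exp H.
case: (boolP (val j \in Y (val i))) => Hij.
  exact: hasOrd_sumL (pord _ _ Hij) T2zo.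
move: Hj; rewrite /red_Y inE /Yplus inE (negbTE Hij) orbF /Yminus.
case: ifP => Hri; last by rewrite inE.
rewrite inE => Hrj.
exact: hasOrd_sumR (pzo _ _) (HT2 Hri Hrj).
Unshelve. all: by end_near. Qed.
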